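(* Let $\kappa$ be an infinite cardinal with $2^\kappa=\kappa^+$. Then for every sequence $\bar p=\langle p_\delta:\delta<\kappa^+\rangle$ of partitions $p_\delta:[\kappa^+]^2\to\theta_\delta$ with $\theta_\delta\le\kappa$, $\kappa^+\nrightarrow_{\bar p}[\kappa\circledast\kappa^+/1\circledast\kappa^+]^2_{\kappa^+}$ holds.
   Context: For $f:[\kappa^+]^2\to\lambda$ and $p:[\kappa^+]^2\to\theta$, $X\subseteq[\kappa^+]^2$ is $(f,p)$-strong if for every $\zeta:\theta\to\lambda$ there is $\{\alpha,\beta\}\in X$ with $f(\alpha,\beta)=\zeta(p(\alpha,\beta))$. $\{\alpha\}\circledast B=\{\{\alpha,\beta\}:\alpha<\beta\in B\}$. The symbol $\kappa^+\nrightarrow_{\bar p}[\kappa\circledast\kappa^+/1\circledast\kappa^+]^2_{\lambda}$ means: there is a single $f:[\kappa^+]^2\to\lambda$ such that for every $\delta$, every $A\in[\kappa^+]^\kappa$ and every $B\in[\kappa^+]^{\kappa^+}$ there is $\alpha\in A$ such that $\{\alpha\}\circledast B$ is $(f,p_\delta)$-strong. *)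

(* Defs.v *)
From Stdlib Require Import Classical.

Definition equipotent (X Y : Type) : Prop :=
  exists (f : X -> Y) (g : Y -> X),
    (forall x, g (f x) = x) /\ (forall y, f (g y) = y).

Definition injects (X Y : Type) : Prop :=
  exists f : X -> Y, forall x1 x2, f x1 = f x2 -> x1 = x2.

Definition infinite_type (K : Type) : Prop := injects nat K.

Definition strict_well_order {T : Type} (lt : T -> T -> Prop) : Prop :=
  (forall x, ~ lt x x) /\
  (forall x y z, lt x y -> lt y z -> lt x z) /\
  (forall x y, lt x y \/ x = y \/ lt y x) /\
  well_founded lt.

(* (T, lt) is (order-isomorphic to) the ordinal kappa^+, where kappa = |K|:
   a well-order all of whose proper initial segments have size <= |K|,
   while T itself has size > |K|. *)
Definition is_succ_card_of (K : Type) {T : Type} (lt : T -> T -> Prop) : Prop :=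
  strict_well_order lt /\
  (forall a : T, injects {b : T | lt b a} K) /\
  ~ injects T K.

(* {alpha} circledast B is (f, p)-strong, for a partition p : [T]^2 -> theta
   and colouring f : [T]^2 -> T; pairs {a,b} with a < b are given as
   (f a b), (p a b). *)
Definition star_strong {T theta : Type} (lt : T -> T -> Prop)
  (f : T -> T -> T) (p : T -> T -> theta) (a : T) (B : T -> Prop) : Prop :=
  forall zeta : theta -> T,
    exists b : T, B b /\ lt a b /\ f a b = zeta (p a b).

(* Main.v *)
Require Import Defs.
From Stdlib Require Import Classical ClassicalEpsilon FunctionalExtensionality ProofIrrelevance Wf_nat Lia Cantor Wellfounded.

Lemma inj_refl (X : Type) : injects X X.
Proof. exists (fun x => x); auto. Qed.

Lemma inj_comp (X Y Z : Type) : injects X Y -> injects Y Z -> injects X Z.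
Proof.
  intros [f Hf] [g Hg]. exists (fun x => g (f x)). intros; auto.
Qed.

Lemma inj_prod (X Y X' Y' : Type) : injects X X' -> injects Y Y' -> injects (X * Y) (X' * Y').
Proof.
  intros [f Hf] [g Hg]. exists (fun p => (f (fst p), g (snd p))).
  intros [a b] [c d] H. simpl in H. inversion H. f_equal; auto.
Qed.

Lemma inj_sum (X Y X' Y' : Type) : injects X X' -> injects Y Y' -> injects (X + Y) (X' + Y').
Proof.
  intros [f Hf] [g Hg]. exists (fun p => match p with inl a => inl (f a) | inr b => inr (g b) end).
  intros [a|a] [b|b] H; inversion H; f_equal; auto.
Qed.

Lemma nat2_nat : injects (nat * nat) nat.
Proof.
  exists Cantor.to_nat. intros a b H.
  rewrite <- (Cantor.cancel_of_to a), <- (Cantor.cancel_of_to b), H. reflexivity.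
Qed.

Lemma sig_eq (X : Type) (P : X -> Prop) (a b : {x | P x}) : proj1_sig a = proj1_sig b -> a = b.
Proof.
  destruct a as [a Ha], b as [b Hb]; simpl; intros; subst. f_equal; apply proof_irrelevance.
Qed.

Lemma hotel (K : Type) : injects nat K -> injects (nat + K) K.
Proof.
  intros [i Hi].
  exists (fun s => match s with
           | inl n => i (2 * n)
           | inr k => match excluded_middle_informative (exists m, i m = k) with
                      | left H => i (2 * proj1_sig (constructive_indefinite_description _ H) + 1)
                      | right _ => k end end).
  intros [n|k] [n'|k'] E.
  - f_equal. apply Hi in E. lia.
  - destruct (excluded_middle_informative _) as [H|H].
    + apply Hi in E. lia.
    + exfalso. apply H. exists (2*n). auto.
  - destruct (excluded_middle_informative _) as [H|H].
    + apply Hi in E. lia.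
    + exfalso. apply H. exists (2*n'). auto.
  - destruct (excluded_middle_informative (exists m, i m = k)) as [H|H];
    destruct (excluded_middle_informative (exists m, i m = k')) as [H'|H'].
    + destruct (constructive_indefinite_description _ H) as [m Hm].
      destruct (constructive_indefinite_description _ H') as [m' Hm']. simpl in E.
      apply Hi in E. assert (m = m') by lia. subst. reflexivity.
    + exfalso. apply H'. eauto.
    + exfalso. apply H. eauto.
    + subst; reflexivity.
Qed.

Lemma left_inv (X Y : Type) (f : X -> Y) : X -> (forall a b, f a = f b -> a = b) ->
  exists g : Y -> X, forall x, g (f x) = x.
Proof.
  intros x0 Hf.
  exists (fun y => match excluded_middle_informative (exists x, f x = y) with
          | left H => proj1_sig (constructive_indefinite_description _ H)
          | right _ => x0 end).
  intros x. destruct (excluded_middle_informative _) as [H|H].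
  - destruct (constructive_indefinite_description _ H); simpl; auto.
  - exfalso; eauto.
Qed.

Lemma inj_fun (X Y C : Type) : X -> injects X Y -> injects (X -> C) (Y -> C).
Proof.
  intros x0 [f Hf]. destruct (left_inv X Y f x0 Hf) as [g Hg].
  exists (fun u y => u (g y)). intros u v E.
  apply functional_extensionality. intros x.
  rewrite <- (Hg x). exact (f_equal (fun w => w (f x)) E).
Qed.

Section Greedy.
Variables (J Y Src : Type) (R : J -> J -> Prop) (wfR : well_founded R)
  (tot : forall j1 j2, j1 = j2 \/ R j1 j2 \/ R j2 j1)
  (S : J -> Y -> Prop)
  (small : forall j, ~ injects Src {j' | R j' j})
  (big : forall j, injects Src {y | S j y}).

Lemma step_ex j (rec : forall j', R j' j -> Y) :
  exists y, S j y /\ forall j' (H : R j' j), rec j' H <> y.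
Proof.
  apply NNPP. intro N.
  assert (C : forall y, S j y -> exists j', R j' j /\ exists H, rec j' H = y).
  { intros y Hy. apply NNPP; intro N2. apply N. exists y. split; auto.
    intros j' H E. apply N2. exists j'. split; auto. exists H; auto. }
  destruct (big j) as [i Hi].
  apply (small j).
  exists (fun s => let y := proj1_sig (i s) in
    let e := constructive_indefinite_description _ (C y (proj2_sig (i s))) in
    exist (fun j' => R j' j) (proj1_sig e) (proj1 (proj2_sig e))).
  intros s1 s2 E. simpl in E.
  destruct (constructive_indefinite_description _ (C _ (proj2_sig (i s1)))) as [j1 [H1 [P1 E1]]].
  destruct (constructive_indefinite_description _ (C _ (proj2_sig (i s2)))) as [j2 [H2 [P2 E2]]].
  simpl in E. injection E as E. subst j2.
  apply Hi. apply sig_eq. rewrite <- E1, <- E2. f_equal. apply proof_irrelevance.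
Qed.

Definition stepF j (rec : forall j', R j' j -> Y) : Y :=
  proj1_sig (constructive_indefinite_description _ (step_ex j rec)).

Definition selg : J -> Y := Fix wfR (fun _ => Y) stepF.

Lemma selg_eq j : selg j = stepF j (fun j' _ => selg j').
Proof.
  unfold selg. apply (Fix_eq wfR (fun _ => Y) stepF). intros x f g H.
  assert (f = g). { apply functional_extensionality_dep; intro y.
    apply functional_extensionality_dep; intro q. apply H. }
  subst; reflexivity.
Qed.

Lemma greedy : exists sel : J -> Y, (forall j, S j (sel j)) /\ (forall j1 j2, sel j1 = sel j2 -> j1 = j2).
Proof.
  exists selg.
  assert (G : forall j, S j (selg j) /\ forall j', R j' j -> selg j' <> selg j).
  { intro j. rewrite (selg_eq j). unfold stepF.
    destruct (constructive_indefinite_description _ _) as [y [Hy Hn]]. simpl.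
    split; auto. }
  split. - intro j; apply G.
  - intros j1 j2 E. destruct (tot j1 j2) as [|[H|H]]; auto.
    + exfalso. apply (proj2 (G j2) j1 H); auto.
    + exfalso. apply (proj2 (G j1) j2 H); auto.
Qed.
End Greedy.

Definition lex2 {A B : Type} (RA : A -> A -> Prop) (RB : B -> B -> Prop) (x y : A * B) : Prop :=
  RA (fst x) (fst y) \/ (fst x = fst y /\ RB (snd x) (snd y)).

Lemma lex2_wf {A B : Type} (RA : A -> A -> Prop) (RB : B -> B -> Prop) :
  well_founded RA -> well_founded RB -> well_founded (lex2 RA RB).
Proof.
  intros wA wB [a b]. revert b. induction (wA a) as [a _ IHa]. intro b.
  induction (wB b) as [b _ IHb]. constructor. intros [a' b'] [H|[E H]]; simpl in *.
  - apply IHa; auto.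
  - subst. apply IHb; auto.
Qed.

Lemma lex2_tot {A B : Type} (RA : A -> A -> Prop) (RB : B -> B -> Prop) :
  (forall a1 a2, a1 = a2 \/ RA a1 a2 \/ RA a2 a1) ->
  (forall b1 b2, b1 = b2 \/ RB b1 b2 \/ RB b2 b1) ->
  forall x y, x = y \/ lex2 RA RB x y \/ lex2 RA RB y x.
Proof.
  intros tA tB [a1 b1] [a2 b2]. unfold lex2; simpl.
  destruct (tA a1 a2) as [E|[H|H]]; [subst|auto|auto].
  destruct (tB b1 b2) as [E|[H|H]]; [subst|auto|auto]; auto.
Qed.

Section Hess.
Variables (X : Type) (ltX : X -> X -> Prop) (wo : strict_well_order ltX).

Definition VX := (nat + X)%type.
Definition vlt (u v : VX) : Prop :=
  match u, v with
  | inl n, inl m => n < m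
  | inl _, inr _ => True
  | inr _, inl _ => False
  | inr x, inr y => ltX x y
  end.
Definition vle u v := u = v \/ vlt u v.

Lemma vlt_wf : well_founded vlt.
Proof.
  destruct wo as [_ [_ [_ wf]]].
  assert (HN : forall n, Acc vlt (inl n)).
  { intro n. induction (lt_wf n) as [n _ IH]. constructor. intros [m|m] H; simpl in H; [apply IH; auto|contradiction]. }
  intros [n|x]; auto. induction (wf x) as [x _ IH]. constructor. intros [m|m] H; simpl in H; auto.
Qed.

Lemma vlt_trans u v w : vlt u v -> vlt v w -> vlt u w.
Proof.
  destruct wo as [_ [tr _]].
  destruct u, v, w; simpl; intros; try lia; eauto; contradiction.
Qed.

Lemma vlt_irr u : ~ vlt u u.
Proof. destruct wo as [ir _]. destruct u; simpl; [lia| apply ir]. Qed.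

Lemma vlt_tot u v : u = v \/ vlt u v \/ vlt v u.
Proof.
  destruct wo as [_ [_ [tt _]]].
  destruct u as [n|x], v as [m|y]; simpl; auto.
  - assert (n = m \/ n < m \/ m < n) as [|[|]] by lia; subst; auto.
  - destruct (tt x y) as [|[|]]; subst; auto.
Qed.

Lemma vle_trans u v w : vle u v -> vle v w -> vle u w.
Proof. unfold vle; intros [|] [|]; subst; eauto using vlt_trans. Qed.

Definition vmax (u v : VX) : VX :=
  if excluded_middle_informative (vlt u v) then v else u.

Lemma vmax_l u v : vle u (vmax u v).
Proof. unfold vmax, vle; destruct (excluded_middle_informative _); auto. Qed.
Lemma vmax_r u v : vle v (vmax u v).
Proof.
  unfold vmax, vle; destruct (excluded_middle_informative _); auto.
  destruct (vlt_tot u v) as [|[|]]; subst; auto; contradiction.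
Qed.
Lemma vmax_in u v : vmax u v = u \/ vmax u v = v.
Proof. unfold vmax; destruct (excluded_middle_informative _); auto. Qed.

Definition inV (z : X) (u : VX) : Prop :=
  match u with inl _ => True | inr x => ltX x z end.
Definition V z := {u : VX | inV z u}.

Definition key {z} (j : V z * V z) : VX * (VX * VX) :=
  (vmax (proj1_sig (fst j)) (proj1_sig (snd j)), (proj1_sig (fst j), proj1_sig (snd j))).
Definition G z (j j' : V z * V z) : Prop := lex2 vlt (lex2 vlt vlt) (key j) (key j').

Lemma G_wf z : well_founded (G z).
Proof. unfold G. apply wf_inverse_image. apply lex2_wf; [apply vlt_wf|apply lex2_wf; apply vlt_wf]. Qed.

Lemma G_tot z j1 j2 : j1 = j2 \/ G z j1 j2 \/ G z j2 j1.
Proof.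
  unfold G. destruct (lex2_tot vlt (lex2 vlt vlt) vlt_tot (lex2_tot vlt vlt vlt_tot vlt_tot) (key j1) (key j2)) as [E|[|]]; auto.
  left. destruct j1 as [a b], j2 as [c d]. unfold key in E; simpl in E. injection E as E1 E2 E3.
  f_equal; apply sig_eq; auto.
Qed.

Lemma G_seg z (j j' : V z * V z) : G z j' j ->
  vle (proj1_sig (fst j')) (vmax (proj1_sig (fst j)) (proj1_sig (snd j))) /\
  vle (proj1_sig (snd j')) (vmax (proj1_sig (fst j)) (proj1_sig (snd j))).
Proof.
  unfold G, lex2, key; simpl. intro H.
  assert (M : vle (vmax (proj1_sig (fst j')) (proj1_sig (snd j'))) (vmax (proj1_sig (fst j)) (proj1_sig (snd j)))).
  { destruct H as [H|[E _]]; [right; auto | left; auto]. }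
  split; eapply vle_trans; [apply vmax_l|exact M|apply vmax_r|exact M].
Qed.

Lemma V_incl y z : ltX y z -> injects (V y) (V z).
Proof.
  destruct wo as [_ [tr _]]. intro H.
  exists (fun u => exist (inV z) (proj1_sig u) (match proj1_sig u as w return inV y w -> inV z w with
                              | inl _ => fun _ => I | inr x => fun h => tr _ _ _ h H end (proj2_sig u))).
  intros a b E. apply sig_eq. exact (f_equal (@proj1_sig _ _) E).
Qed.

Lemma nat_V z : injects nat (V z).
Proof. exists (fun n => exist (inV z) (inl n) I). intros a b E. injection E; auto. Qed.

Lemma Hess : forall z, injects (V z * V z) (V z).
Proof.
  destruct wo as [ir [tr [tt wf]]].
  intro z. induction (wf z) as [z _ IH].
  destruct (classic (exists y, ltX y z /\ injects (V z) (V y))) as [[y [Hy Hi]]|NA].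
  { eapply inj_comp. apply inj_prod; exact Hi.
    eapply inj_comp. apply IH; auto. apply V_incl; auto. }
  destruct (classic (exists y0, ltX y0 z)) as [[y0 Hy0]|NB].
  2:{
    assert (I1 : injects (V z) nat).
    { exists (fun u => match proj1_sig u with inl n => n | inr _ => 0 end).
      intros [[a|a] Ha] [[b|b] Hb] E; simpl in *; try (exfalso; apply NB; eauto; fail).
      subst. apply sig_eq; auto. }
    eapply inj_comp. apply inj_prod; exact I1. eapply inj_comp. apply nat2_nat. apply nat_V. }
  destruct (greedy (V z * V z) (V z) (V z) (G z) (G_wf z) (G_tot z) (fun _ _ => True)) as [sel [_ Hsel]].
  - intros [u1 u2] Hinj.
    set (m := vmax (proj1_sig u1) (proj1_sig u2)).
    assert (Hm : inV z m). { unfold m. destruct (vmax_in (proj1_sig u1) (proj1_sig u2)) as [E|E]; rewrite E; apply proj2_sig. }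
    destruct m as [n|x] eqn:Em.
    +
      apply NA. exists y0. split; auto.
      eapply inj_comp. exact Hinj.
      eapply inj_comp. 2:{ eapply inj_comp. apply nat2_nat. apply nat_V. }
      assert (Hs : forall s : {j' | G z j' (u1, u2)},
        (exists a, proj1_sig (fst (proj1_sig s)) = inl a) /\ (exists b, proj1_sig (snd (proj1_sig s)) = inl b)).
      { intros [j' g]. simpl. apply G_seg in g. simpl in g. fold m in g. rewrite Em in g.
        destruct g as [g1 g2].
        split; [destruct (proj1_sig (fst j')) as [a|a] | destruct (proj1_sig (snd j')) as [a|a]]; eauto;
        [destruct g1 as [g3|g3] | destruct g2 as [g3|g3]]; try discriminate; contradiction. }
      set (no := fun w : VX => match w with inl a => a | inr _ => 0 end).
      exists (fun s => (no (proj1_sig (fst (proj1_sig s))), no (proj1_sig (snd (proj1_sig s))))).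
      intros s s' E. injection E as E1 E2.
      destruct (Hs s) as [[a Ha] [b Hb]], (Hs s') as [[a' Ha'] [b' Hb']].
      destruct s as [[[cv ch] [dv dh]] g], s' as [[[cv' ch'] [dv' dh']] g']. simpl in *.
      subst cv dv cv' dv'. simpl in E1, E2. subst a' b'.
      apply sig_eq; simpl. f_equal; apply sig_eq; reflexivity.
    +
      simpl in Hm.
      destruct (classic (exists y, ltX x y /\ ltX y z)) as [[y [Hxy Hyz]]|NY].
      * apply NA. exists y. split; auto.
        eapply inj_comp. exact Hinj. eapply inj_comp. 2: apply (IH y Hyz).
        assert (Hin : forall w : V z, vle (proj1_sig w) (inr x) -> inV y (proj1_sig w)).
        { intros [[a|a] ha] hw; simpl in *; auto. destruct hw as [hw|hw]; [injection hw; intro; subst; auto| eauto]. }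
        assert (Hs : forall s : {j' | G z j' (u1, u2)}, inV y (proj1_sig (fst (proj1_sig s))) /\ inV y (proj1_sig (snd (proj1_sig s)))).
        { intros [j' g]. simpl. apply G_seg in g. simpl in g. fold m in g. rewrite Em in g.
          split; apply Hin; apply g. }
        exists (fun s => (exist (inV y) (proj1_sig (fst (proj1_sig s))) (proj1 (Hs s)),
                          exist (inV y) (proj1_sig (snd (proj1_sig s))) (proj2 (Hs s)))).
        intros [[a b] g] [[c d] g'] E. injection E as E1 E2. apply sig_eq; simpl.
        f_equal; apply sig_eq; auto.
      * apply NA. exists x. split; auto.
        exists (fun u : V z => match proj1_sig u as w return inV z w -> V x with
                      | inl n => fun _ => exist (inV x) (inl (S n)) I
                      | inr w => fun h => match excluded_middle_informative (ltX w x) with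
                                 | left H => exist (inV x) (inr w) H
                                 | right _ => exist (inV x) (inl 0) I end end (proj2_sig u)).
        assert (C : forall w, ltX w z -> ~ ltX w x -> w = x).
        { intros w h1 h2. destruct (tt w x) as [|[|]]; auto; try contradiction. exfalso; eauto. }
        intros [[a|a] ha] [[b|b] hb] E; simpl in E.
        -- injection E; intro; subst. apply sig_eq; auto.
        -- destruct (excluded_middle_informative (ltX b x)); injection E; intros; discriminate.
        -- destruct (excluded_middle_informative (ltX a x)); injection E; intros; discriminate.
        -- destruct (excluded_middle_informative (ltX a x)), (excluded_middle_informative (ltX b x));
           [injection E; intros; subst; apply sig_eq; reflexivity
           |injection E; intros; discriminate
           |injection E; intros; discriminate
           |apply sig_eq; simpl; f_equal; rewrite (C a ha n), (C b hb n0); auto].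
  - intros j. exists (fun u => exist (fun _ : V z => True) u I). intros a b E. injection E; auto.
  - exists sel; auto.
Qed.
End Hess.


Definition ltO {K} (W : K -> K -> Prop) (a b : option K) : Prop :=
  match a, b with
  | Some x, Some y => W x y
  | Some _, None => True
  | None, _ => False
  end.

Lemma ltO_wo K (W : K -> K -> Prop) : strict_well_order W -> strict_well_order (ltO W).
Proof.
  intros [ir [tr [tt wf]]]. split; [|split; [|split]].
  - intros [x|]; simpl; auto.
  - intros [x|] [y|] [z|]; simpl; eauto; tauto.
  - intros [x|] [y|]; simpl; auto. destruct (tt x y) as [|[|]]; subst; auto.
  - assert (HS : forall x, Acc (ltO W) (Some x)).
    { intro x. induction (wf x) as [x _ IH]. constructor. intros [y|] H; simpl in H; [auto|contradiction]. }
    intros [x|]; auto. constructor. intros [y|] H; simpl in H; auto; contradiction.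
Qed.

Lemma KK_of_wo K (W : K -> K -> Prop) : strict_well_order W -> injects nat K -> injects (K * K) K.
Proof.
  intros wo HN.
  pose proof (Hess (option K) (ltO W) (ltO_wo K W wo) None) as H.
  eapply inj_comp. 2: eapply inj_comp. 3: apply (hotel K HN).
  - assert (I1 : injects K (V (option K) (ltO W) None)).
    { exists (fun k => exist (inV (option K) (ltO W) None) (inr (Some k)) I).
      intros a b E. injection E. intros; congruence. }
    eapply inj_comp. apply inj_prod; exact I1. exact H.
  - exists (fun u : V (option K) (ltO W) None => match proj1_sig u with
                 | inl n => inl n | inr (Some k) => inr k | inr None => inl 0 end).
    intros [[a|[a|]] ha] [[b|[b|]] hb] E; simpl in *; try contradiction; try discriminate.
    + injection E; intros; subst; apply sig_eq; auto.
    + injection E; intros; subst; apply sig_eq; auto.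
Qed.

Lemma minimal_ex {A} (R : A -> A -> Prop) (P : A -> Prop) : well_founded R ->
  (exists x, P x) -> exists x, P x /\ forall y, R y x -> ~ P y.
Proof.
  intros wf [x Hx]. apply NNPP; intro N. revert Hx. induction (wf x) as [x _ IH].
  intro Hx. apply N. exists x. split; [exact Hx|]. intros y Hy Py. exact (IH y Hy Py).
Qed.

Section Main.
Variables (K T : Type) (lt : T -> T -> Prop)
  (HKinf : infinite_type K) (HT : is_succ_card_of K lt) (Hgch : equipotent (K -> bool) T).

Lemma lt_irr x : ~ lt x x. Proof. apply HT. Qed.
Lemma lt_trans x y z : lt x y -> lt y z -> lt x z. Proof. apply HT. Qed.
Lemma lt_tot x y : lt x y \/ x = y \/ lt y x. Proof. apply HT. Qed.
Lemma lt_wf : well_founded lt. Proof. apply HT. Qed.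
Lemma Hseg a : injects {b | lt b a} K. Proof. apply HT. Qed.
Lemma HnT : ~ injects T K. Proof. apply HT. Qed.

Lemma K_T : injects K T.
Proof.
  destruct Hgch as [f [g [H1 H2]]].
  exists (fun k => f (fun x => if excluded_middle_informative (x = k) then true else false)).
  intros a b E. apply (f_equal g) in E. rewrite !H1 in E.
  apply (f_equal (fun u => u a)) in E.
  destruct (excluded_middle_informative (a = a)), (excluded_middle_informative (a = b)); auto; try discriminate.
  contradiction.
Qed.

Definition wK : K -> T := proj1_sig (constructive_indefinite_description _ K_T).
Lemma wK_inj a b : wK a = wK b -> a = b.
Proof. unfold wK. destruct (constructive_indefinite_description _ _); auto. Qed.
Definition W (a b : K) : Prop := lt (wK a) (wK b).

Lemma W_wo : strict_well_order W.
Proof.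
  unfold W. split; [|split; [|split]].
  - intros; apply lt_irr.
  - intros; eapply lt_trans; eauto.
  - intros x y. destruct (lt_tot (wK x) (wK y)) as [|[E|]]; auto. apply wK_inj in E; auto.
  - apply wf_inverse_image. apply lt_wf.
Qed.

Lemma KK : injects (K * K) K.
Proof. apply (KK_of_wo K W W_wo HKinf). Qed.

Lemma unitK : injects (unit + K) K.
Proof.
  eapply inj_comp. 2: apply (hotel K HKinf). apply inj_sum. exists (fun _ => 0). intros [] []; auto. apply inj_refl.
Qed.

Lemma good_g : exists g : K -> K, (forall a b, g a = g b -> a = b) /\ forall k, ~ injects K {y | W y (g k)}.
Proof.
  destruct (classic (exists x, injects K {y | W y x})) as [Ex|NE].
  - destruct (minimal_ex W _ (proj2 (proj2 (proj2 W_wo))) Ex) as [x0 [[i Hi] Hm]].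
    exists (fun k => proj1_sig (i k)). split.
    + intros a b E. apply Hi. apply sig_eq; auto.
    + intro k. apply Hm. apply (proj2_sig (i k)).
  - exists (fun k => k). split; auto. intros k H. apply NE; eauto.
Qed.

Lemma bounded (A : T -> Prop) : injects {x | A x} K -> exists c, forall a, A a -> lt a c.
Proof.
  intros [iA HiA]. apply NNPP; intro N.
  assert (C : forall x, exists a, A a /\ (x = a \/ lt x a)).
  { intro x. apply NNPP; intro N2. apply N. exists x. intros a Ha.
    destruct (lt_tot a x) as [|[|]]; auto; exfalso; apply N2; exists a; auto. }
  apply HnT.
  set (h := fun a => proj1_sig (constructive_indefinite_description _ (Hseg a))).
  assert (Hh : forall a u v, h a u = h a v -> u = v).
  { intro a. unfold h. destruct (constructive_indefinite_description _ _); auto. }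
  set (ch := fun x => constructive_indefinite_description _ (C x)).
  eapply inj_comp. 2: apply KK. eapply inj_comp. 2: apply inj_prod; [apply inj_refl|apply unitK].
  exists (fun x => let a := ch x in
    (iA (exist A (proj1_sig a) (proj1 (proj2_sig a))),
     match excluded_middle_informative (lt x (proj1_sig a)) with
     | left H => inr (h (proj1_sig a) (exist _ x H))
     | right _ => inl tt end)).
  intros x y E. injection E as E1 E2. apply HiA in E1. injection E1 as E1.
  destruct (ch x) as [a [Aa Ha]], (ch y) as [b [Ab Hb]]. simpl in *. subst b.
  destruct (excluded_middle_informative (lt x a)) as [L1|L1], (excluded_middle_informative (lt y a)) as [L2|L2];
    try discriminate.
  - injection E2 as E2. apply Hh in E2. injection E2; auto.
  - destruct Ha, Hb; subst; auto; contradiction.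
Qed.

Lemma unbounded (B : T -> Prop) : equipotent {x | B x} T -> forall x, exists b, B b /\ lt x b.
Proof.
  intros [f [g [H1 H2]]] x. apply NNPP; intro N. apply HnT.
  assert (C : forall y : {x | B x}, proj1_sig y = x \/ lt (proj1_sig y) x).
  { intros [y By]; simpl. destruct (lt_tot y x) as [|[|]]; auto. exfalso; eauto. }
  eapply inj_comp. exists g. intros a b E. rewrite <- (H2 a), <- (H2 b), E; auto.
  eapply inj_comp. 2: apply unitK. eapply inj_comp. 2: apply inj_sum; [apply inj_refl| apply (Hseg x)].
  exists (fun y => match excluded_middle_informative (lt (proj1_sig y) x) with
                   | left H => inr (exist _ (proj1_sig y) H) | right _ => inl tt end).
  intros a b E. destruct (excluded_middle_informative (lt (proj1_sig a) x)), (excluded_middle_informative (lt (proj1_sig b) x));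
    try discriminate.
  - injection E; intros; apply sig_eq; auto.
  - apply sig_eq. destruct (C a), (C b); congruence.
Qed.


Definition Trip := (T * (K -> T) * (K -> K -> T))%type.

Lemma code_ex : injects Trip T.
Proof.
  destruct Hgch as [phi [psi [H1 H2]]].
  destruct HKinf as [i Hi]. destruct KK as [pi Hpi].
  set (Z := (K + (K * K + K * (K * K)))%type).
  assert (IZ : injects Z K).
  { exists (fun s : Z => match s with
            | inl k => pi (i 0, k)
            | inr (inl (a, b)) => pi (i 1, pi (a, b))
            | inr (inr (a, (b, c))) => pi (i 2, pi (a, pi (b, c))) end).
    intros [k|[[a b]|[a [b c]]]] [k'|[[a' b']|[a' [b' c']]]] E;
      apply Hpi in E; injection E; intros; repeat match goal with H : i _ = i _ |- _ => apply Hi in H end;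
      try discriminate; subst;
      repeat match goal with H : pi _ = pi _ |- _ => apply Hpi in H; injection H; intros; clear H end;
      subst; auto. }
  eapply inj_comp. 2: eapply inj_comp. 2: apply (inj_fun Z K bool (inl (i 0)) IZ).
  - exists (fun t : Trip => fun s : Z => match s with
            | inl k => psi (fst (fst t)) k
            | inr (inl (a, b)) => psi (snd (fst t) a) b
            | inr (inr (a, (b, c))) => psi (snd t a b) c end).
    intros [[d e] z] [[d' e'] z'] E. simpl in E.
    assert (Hd : d = d').
    { rewrite <- (H2 d), <- (H2 d'). f_equal. apply functional_extensionality; intro k.
      exact (f_equal (fun u => u (inl k)) E). }
    assert (He : e = e').
    { apply functional_extensionality; intro a. rewrite <- (H2 (e a)), <- (H2 (e' a)). f_equal.
      apply functional_extensionality; intro b. exact (f_equal (fun u => u (inr (inl (a, b)))) E). }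
    assert (Hz : z = z').
    { apply functional_extensionality; intro a. apply functional_extensionality; intro b.
      rewrite <- (H2 (z a b)), <- (H2 (z' a b)). f_equal.
      apply functional_extensionality; intro c. exact (f_equal (fun u => u (inr (inr (a, (b, c))))) E). }
    subst; auto.
  - exists phi. intros a b E. rewrite <- (H1 a), <- (H1 b), E; auto.
Qed.

Definition code : Trip -> T := proj1_sig (constructive_indefinite_description _ code_ex).
Lemma code_inj a b : code a = code b -> a = b.
Proof. unfold code. destruct (constructive_indefinite_description _ _); auto. Qed.

Definition d_of (t : Trip) : T := fst (fst t).
Definition e_of (t : Trip) : K -> T := snd (fst t).
Definition z_of (t : Trip) : K -> K -> T := snd t.

Definition valid (b : T) (t : Trip) : Prop :=
  lt (code t) b /\ (forall k, lt (e_of t k) b) /\ (forall k1 k2, e_of t k1 = e_of t k2 -> k1 = k2).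

Definition hseg (b : T) : {x | lt x b} -> K := proj1_sig (constructive_indefinite_description _ (Hseg b)).
Lemma hseg_inj b u v : hseg b u = hseg b v -> u = v.
Proof. unfold hseg. destruct (constructive_indefinite_description _ _); auto. Qed.

Lemma sel_ex b : exists sel : {t | valid b t} -> T,
  (forall j, exists k, e_of (proj1_sig j) k = sel j) /\ (forall j1 j2, sel j1 = sel j2 -> j1 = j2).
Proof.
  destruct good_g as [g [Hg Hsm]].
  set (c' := fun j : {t | valid b t} => g (hseg b (exist _ (code (proj1_sig j)) (proj1 (proj2_sig j))))).
  assert (Hc' : forall j1 j2, c' j1 = c' j2 -> j1 = j2).
  { intros j1 j2 E. apply Hg, hseg_inj in E. injection E as E. apply code_inj in E. apply sig_eq; auto. }
  destruct W_wo as [_ [_ [Wt Wwf]]].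
  assert (wfR : well_founded (fun j1 j2 => W (c' j1) (c' j2))) by (apply wf_inverse_image; auto).
  assert (totR : forall j1 j2, j1 = j2 \/ W (c' j1) (c' j2) \/ W (c' j2) (c' j1)).
  { intros j1 j2. destruct (Wt (c' j1) (c' j2)) as [|[E|]]; auto. }
  apply (greedy {t | valid b t} T K (fun j1 j2 => W (c' j1) (c' j2)) wfR totR
           (fun j y => exists k, e_of (proj1_sig j) k = y)).
  - intros j [i Hi]. apply (Hsm (hseg b (exist _ (code (proj1_sig j)) (proj1 (proj2_sig j))))).
    exists (fun k => exist (fun y => W y (c' j)) (c' (proj1_sig (i k))) (proj2_sig (i k))).
    intros a a' E. injection E as E. apply Hc' in E. apply Hi. apply sig_eq; auto.
  - intros j. exists (fun k => exist (fun y => exists k, e_of (proj1_sig j) k = y) (e_of (proj1_sig j) k) (ex_intro _ k eq_refl)).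
    intros a a' E. injection E as E. apply (proj2 (proj2 (proj2_sig j))); auto.
Qed.

Definition sel b := proj1_sig (constructive_indefinite_description _ (sel_ex b)).
Lemma sel_spec b : (forall j, exists k, e_of (proj1_sig j) k = sel b j) /\ (forall j1 j2, sel b j1 = sel b j2 -> j1 = j2).
Proof. unfold sel. destruct (constructive_indefinite_description _ _); auto. Qed.

Variables (theta : T -> Type) (Htheta : forall delta : T, injects (theta delta) K)
  (p : forall delta : T, T -> T -> theta delta).

Definition iota d : theta d -> K := proj1_sig (constructive_indefinite_description _ (Htheta d)).
Lemma iota_inj d u v : iota d u = iota d v -> u = v.
Proof. unfold iota. destruct (constructive_indefinite_description _ _); auto. Qed.

Definition fcol (a b : T) : T :=
  match excluded_middle_informative (exists tk : {t | valid b t} * K,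
        sel b (fst tk) = a /\ e_of (proj1_sig (fst tk)) (snd tk) = a) with
  | left H => let tk := proj1_sig (constructive_indefinite_description _ H) in
              let t := proj1_sig (fst tk) in
              z_of t (snd tk) (iota (d_of t) (p (d_of t) a b))
  | right _ => a
  end.

Lemma fcol_spec b t (v : valid b t) k : e_of t k = sel b (exist _ t v) ->
  fcol (e_of t k) b = z_of t k (iota (d_of t) (p (d_of t) (e_of t k) b)).
Proof.
  intro Hk. unfold fcol.
  destruct (excluded_middle_informative _) as [H|H].
  - destruct (constructive_indefinite_description _ H) as [[[t' v'] k'] [E1 E2]]. simpl in *.
    rewrite Hk in E1. apply (proj2 (sel_spec b)) in E1. injection E1 as E1. subst t'.
    apply (proj2 (proj2 v)) in E2. subst k'. reflexivity.
  - exfalso. apply H. exists (exist _ t v, k). simpl. auto.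
Qed.

End Main.

Theorem theorem4p11
  (K : Type) (T : Type) (lt : T -> T -> Prop)
  (HKinf : infinite_type K)
  (HT : is_succ_card_of K lt)
  (Hgch : equipotent (K -> bool) T)
  (theta : T -> Type)
  (Htheta : forall delta : T, injects (theta delta) K)
  (p : forall delta : T, T -> T -> theta delta) :
  exists f : T -> T -> T,
    forall (delta : T) (A B : T -> Prop),
      equipotent {x : T | A x} K ->
      equipotent {x : T | B x} T ->
      exists a : T, A a /\ star_strong lt f (p delta) a B.
Proof.
  set (f := fcol K T lt HKinf HT Hgch theta Htheta p).
  exists f. intros d A B HA HB. apply NNPP; intro N.
  assert (F : forall a : {x | A x}, exists z : theta d -> T, forall b, B b -> lt (proj1_sig a) b ->
             f (proj1_sig a) b <> z (p d (proj1_sig a) b)).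
  { intros [a Aa]. apply NNPP; intro N2. apply N. exists a. split; auto. intro z.
    apply NNPP; intro N3. apply N2. exists z. intros b Bb Lb E. apply N3. exists b; auto. }
  destruct HA as [g1 [g2 [H1 H2]]].
  set (zf := fun a => proj1_sig (constructive_indefinite_description _ (F a))).
  assert (Hzf : forall a b, B b -> lt (proj1_sig a) b -> f (proj1_sig a) b <> zf a (p d (proj1_sig a) b)).
  { intro a. unfold zf. destruct (constructive_indefinite_description _ _); auto. }
  pose proof HKinf as HK0. destruct HK0 as [i0 Hi0].
  set (x0 := proj1_sig (g2 (i0 0))).
  destruct (left_inv _ _ (iota K T theta Htheta d) (p d x0 x0) (iota_inj K T theta Htheta d)) as [iinv Hiinv].
  set (t := (d, (fun k => proj1_sig (g2 k)), (fun k m => zf (g2 k) (iinv m))) : Trip K T).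
  assert (IA : injects {x | A x} K).
  { exists g1. intros a b E. rewrite <- (H1 a), <- (H1 b), E; auto. }
  destruct (bounded K T lt HKinf HT Hgch A IA) as [c Hc].
  destruct (lt_tot K T lt HT (code K T lt HKinf HT Hgch t) c) as [L|[L|L]];
  [ destruct (unbounded K T lt HKinf HT B HB c) as [b [Bb Lb]]
  | destruct (unbounded K T lt HKinf HT B HB c) as [b [Bb Lb]]
  | destruct (unbounded K T lt HKinf HT B HB (code K T lt HKinf HT Hgch t)) as [b [Bb Lb]] ];
  assert (Hcb : lt c b) by (try exact Lb; eapply (lt_trans K T lt HT); eauto);
  assert (Htb : lt (code K T lt HKinf HT Hgch t) b) by (try (rewrite L; exact Lb); try exact Lb; eapply (lt_trans K T lt HT); eauto);
  clear L Lb.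
  all: assert (v : valid K T lt HKinf HT Hgch b t).
  all: try (split; [exact Htb|split];
    [ intro k; eapply (lt_trans K T lt HT); [apply Hc; exact (proj2_sig (g2 k))|exact Hcb]
    | intros k1 k2 E; rewrite <- (H2 k1), <- (H2 k2); f_equal; apply sig_eq; exact E ]).
  all: destruct (proj1 (sel_spec K T lt HKinf HT Hgch b) (exist _ t v)) as [k Hk]; simpl in Hk.
  all: pose proof (fcol_spec K T lt HKinf HT Hgch theta Htheta p b t v k Hk) as Hf.
  all: change (f (proj1_sig (g2 k)) b = zf (g2 k) (iinv (iota K T theta Htheta d (p d (proj1_sig (g2 k)) b)))) in Hf.
  all: rewrite Hiinv in Hf.
  all: apply (Hzf (g2 k) b Bb); [|exact Hf].
  all: eapply (lt_trans K T lt HT); [apply Hc; exact (proj2_sig (g2 k))|exact Hcb].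
Qed.
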